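(* Let $k\ge1$ and let $\alpha_1\ge\alpha_2\ge\dots\ge\alpha_k$ be real numbers in $[0,1]$ with $\alpha_1+\dots+\alpha_k=1$ (where $\alpha_2:=0$ if $k=1$). Let $0\le\delta\le\frac1{16}$. Then at least one of the following holds: (A) $\alpha_1\ge\frac13+\frac23\delta$; (B) $\alpha_1+\alpha_2\ge\frac12+\delta$; (C) there is a non-empty subset $I\subseteq\{1,\dots,k\}$ with $2\delta\le\sum_{i\in I}\alpha_i\le\frac13-\frac43\delta$. *)

(* Defs.v *)
From mathcomp Require Import all_boot all_order all_algebra.
From mathcomp Require Import reals.
Set Implicit Arguments. Unset Strict Implicit. Unset Printing Implicit Defensive.
Import Order.TTheory GRing.Theory Num.Theory.
Local Open Scope ring_scope.

(* The sequence alpha_1,...,alpha_k is alpha : 'I_k -> R, with alpha_(i+1) = alpha i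
   (0-based indexing). [alpha_nth alpha j] is alpha_(j+1) if j < k and 0 otherwise,
   realizing the convention alpha_2 := 0 when k = 1. *)
Definition alpha_nth (R : realType) (k : nat) (alpha : 'I_k -> R) (j : nat) : R :=
  match insub j with Some i => alpha i | None => 0 end.

(* Main.v *)
Require Import Defs.
From mathcomp Require Import all_boot all_order all_algebra.
From mathcomp Require Import reals.
From mathcomp Require Import lra.
Import Order.TTheory GRing.Theory Num.Theory.
Local Open Scope ring_scope.

Lemma crossing (R : realType) (T : nat -> R) (L : R) (k : nat) :
  L < T 0%N -> T k <= L -> exists j, [/\ (j < k)%N, L < T j & T j.+1 <= L].
Proof.
move=> H0; elim: k => [|k IH] Hk; first by move: H0; rewrite ltNge Hk.
case: (leP (T k) L) => Hk'.
  by have [j [jk ? ?]] := IH Hk'; exists j; split => //; apply: ltnW.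
by exists k.
Qed.

Theorem lemma6p2 (R : realType) (k : nat) (alpha : 'I_k -> R) (delta : R) :
  (1 <= k)%N ->
  (forall i : 'I_k, 0 <= alpha i <= 1) ->
  (forall i j : 'I_k, (i <= j)%N -> alpha j <= alpha i) ->
  \sum_(i < k) alpha i = 1 ->
  0 <= delta <= 1 / 16 ->
  [\/ alpha_nth alpha 0 >= 1 / 3 + 2 / 3 * delta,
      alpha_nth alpha 0 + alpha_nth alpha 1 >= 1 / 2 + delta
    | exists I : {set 'I_k},
        I != set0 /\
        2 * delta <= \sum_(i in I) alpha i <= 1 / 3 - 4 / 3 * delta].
Proof.
move=> k1 a01 amono asum /andP[d0 d16].
set f := alpha_nth alpha.
have fE : forall i : 'I_k, f i = alpha i.
  by move=> i; rewrite /f /alpha_nth valK.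
have fout : forall i, (k <= i)%N -> f i = 0.
  by move=> i ki; rewrite /f /alpha_nth insubN // -leqNgt.
have f0 : forall i, 0 <= f i.
  move=> i; case: (ltnP i k) => ik; last by rewrite fout.
  by rewrite (fE (Ordinal ik)); case/andP: (a01 (Ordinal ik)).
have fmono : forall i j, (i <= j)%N -> (j < k)%N -> f j <= f i.
  move=> i j ij jk; have ik := leq_ltn_trans ij jk.
  by rewrite (fE (Ordinal ik)) (fE (Ordinal jk)); apply: amono.
have fsum : \sum_(0 <= i < k) f i = 1.
  by rewrite big_mkord -asum; apply: eq_bigr => i _; rewrite fE.
pose T n := \sum_(n <= i < k) f i.
have Tsplit : forall n, (n <= k)%N -> \sum_(0 <= i < n) f i + T n = 1.
  by move=> n nk; rewrite -fsum (@big_cat_nat _ _ _ n 0 k _ f).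
have Tstep : forall n, (n < k)%N -> T n = f n + T n.+1.
  by move=> n nk; rewrite /T big_ltn.
have Tk : T k = 0 by rewrite /T big_geq.
have T0 : T 0%N = 1 by rewrite /T fsum.
have Tnn : forall n, 0 <= T n by move=> n; apply: sumr_ge0 => i _.
set L := 1 / 3 - 4 / 3 * delta.
have [j [jk HTj HTj1]] : exists j, [/\ (j < k)%N, L < T j & T j.+1 <= L].
  by apply: crossing; rewrite ?Tk ?T0 /L; lra.
case: (boolP ((2 * delta <= T j.+1) && (j.+1 < k)%N)).
  case/andP => H1 H2; apply: Or33.
  exists [set i : 'I_k | (j.+1 <= i)%N]; split.
    by apply/set0Pn; exists (Ordinal H2); rewrite inE.
  have -> : \sum_(i in [set i : 'I_k | (j.+1 <= i)%N]) alpha i = T j.+1.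
    rewrite /T big_geq_mkord; apply: eq_big => [i|i _]; by rewrite ?inE ?fE.
  by rewrite H1 HTj1.
move=> Hn.
have HT1 : T j.+1 <= 2 * delta.
  case: (ltnP j.+1 k) Hn => H; rewrite ?andbT ?andbF -?ltNge => Hn.
    by apply: ltW.
  have -> : j.+1 = k by apply/eqP; rewrite eqn_leq H jk.
  by rewrite Tk mulr_ge0.
have fj := Tstep j jk.
case: (leP (f j) L) => HfjL.
  apply: Or33; exists [set Ordinal jk]; split.
    by apply/set0Pn; exists (Ordinal jk); rewrite inE.
  rewrite big_set1 -fE /=; apply/andP; split => //; rewrite /L in HTj HfjL *; lra.
have Hpre := Tsplit j.+1 jk.
have fL : forall i, (i <= j)%N -> L < f i.
  by move=> i ij; apply: lt_le_trans HfjL (fmono _ _ ij jk).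
clear Hn; case: j jk HTj HTj1 HT1 fj HfjL Hpre fL => [|[|[|j]]] jk HTj HTj1 HT1 fj HfjL Hpre fL.
- apply: Or31; rewrite big_nat1 in Hpre; lra.
- apply: Or32; rewrite big_nat_recr //= big_nat1 in Hpre; lra.
- rewrite !big_nat_recr //= big_geq // add0r in Hpre.
  have h21 := fmono 1%N 2%N isT jk; have h10 := fmono 0%N 1%N isT (ltn_trans (ltnSn 1) jk).
  case: (boolP (1 / 2 + delta <= f 0%N + f 1%N)) => [h|]; first by apply: Or32.
  rewrite -ltNge => h; exfalso; lra.
- exfalso.
  have h4 : \sum_(0 <= i < 4) f i <= \sum_(0 <= i < k) f i.
    rewrite (@big_cat_nat _ _ _ 4 0 k _ f) //=; last by apply: leq_trans jk.
    by rewrite lerDl; apply: sumr_ge0.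
  rewrite fsum !big_nat_recr //= big_geq // add0r in h4.
  have := fL 0%N isT; have := fL 1%N isT; have := fL 2%N isT; have := fL 3%N isT.
  rewrite /L; lra.
Qed.
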